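(* Consider the market and VCG mechanism described in the context, with the aggregate-dependence assumption. Fix a bidder $l\in L$ with true cost $c_l:\mathcal X_l\to\mathbb{R}_+$, and arbitrary fixed bids $\mathcal{C}_{-l}=\{c_j\}_{j\in L\setminus\{l\}}$ of the other bidders (not necessarily truthful); let $\mathcal{C}=(\mathcal{C}_{-l},c_l)$. Suppose bidder $l$ instead participates under a finite set $S$ of identities (disjoint from $L$) with bids $\mathcal{B}_S=\{b_k\}_{k\in S}$, $b_k:\hat{\mathcal X}_k\to\mathbb{R}_+$, $0\in\hat{\mathcal X}_k$, $b_k(0)=0$, where $\sum_{k\in S}\hat{\mathcal X}_k\subseteq\mathcal X_l$ (Minkowski sum). Let $\mathcal{B}=(\mathcal{C}_{-l},\mathcal{B}_S)$ be the resulting profile on the bidder set $L'=(L\setminus\{l\})\cup S$, and let $\gamma>0$ be a weak-supermodularity constant of the market objective on $L'$. Then bidder $l$'s total utility from shill bidding, $$U_{\mathrm{shill}}=\sum_{k\in S}p_k(\mathcal{B})-c_l\Big(\sum_{k\in S}x^*_k(\mathcal{B})\Big),$$ satisfies $$U_{\mathrm{shill}}\le u_l(\mathcal{C})+\big[\gamma^{-1}-1\big]\big[J(\mathcal{C}_{-l})-J(\mathcal{C}_{-l},\mathcal{B}_S)\big]\le u_l(\mathcal{C})+\big[\gamma^{-1}-1\big]\big[J(\mathcal{C}_{-l})-J(\mathcal{C}_{-l},\mathcal{B}^0_l)\big],$$ where $u_l(\mathcal{C})$ is bidder $l$'s VCG utility when bidding the single truthful bid $c_l$, $J(\mathcal{C}_{-l})$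 is the objective with bidder $l$ removed, and $\mathcal{B}^0_l$ is the single bid $b_l(x_l)=0$ for all $x_l\in\mathcal X_l$.
   Context: Market model. For a finite bidder set $N$ and $t\ge1$ types of supply, bidder $j\in N$ submits a bid function $b_j:\hat{\mathcal X}_j\to\mathbb{R}_+$ with $0\in\hat{\mathcal X}_j\subseteq\mathbb{R}^t_+$, $b_j(0)=0$; a bid profile is $\mathcal{B}=\{b_j\}_{j\in N}$. Aggregate-dependence assumption (same supply types from different bidders are perfect substitutes): there are fixed functions $\bar d:\mathbb{R}^t_+\times\mathbb{R}^p\to\mathbb{R}$ and $\bar g:\mathbb{R}^t_+\times\mathbb{R}^p\to\mathbb{R}^q$, and for any bidder set the cost term and constraints are $d(x,y)=\bar d(\sum_j x_j,y)$, $g(x,y)=\bar g(\sum_j x_j,y)$. For $S\subseteq N$, $$J(\mathcal{B}_S)=\min\Big\{\sum_{j\in S}b_j(x_j)+d(x,y):\ x\in\textstyle\prod_{j\in N}\hat{\mathcal X}_j,\ y\in\mathbb{R}^p,\ g(x,y)\le0,\ x_j=0\ \forall j\notin S\Big\},$$ with value $+\infty$ if infeasible (minima assumed attained when finite). Write $J(\mathcal{B})=J(\mathcal{B}_N)$ and $J(\mathcal{B}_{-K})=J(\mathcal{B}_{N\setminus K})$. $(x^*(\mathcal{B}),y^*(\mathcal{B}))$ denotes the minimizer for $S=N$ chosen by a fixed tie-breaking rule. Standing assumption: for every profile considered, $J(\mathcal{B})<\infty$ and $J(\mathcal{B}_{-j})<\infty$ for every bidder $j$. VCG mechanism (Clarke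 pivot): $p_j(\mathcal{B})=b_j(x^*_j(\mathcal{B}))+J(\mathcal{B}_{-j})-J(\mathcal{B})$; the utility of a bidder $j$ with true cost $c_j$ is $u_j(\mathcal{B})=p_j(\mathcal{B})-c_j(x^*_j(\mathcal{B}))$. Weak-supermodularity constant on bidder set $N$: $\gamma>0$ such that for every bid profile $\mathcal{B}$ on $N$ and all $K,S\subseteq N$ with $J(\mathcal{B}_{S\setminus K})<\infty$, $$\gamma\sum_{j\in K}\big[J(\mathcal{B}_{S\setminus\{j\}})-J(\mathcal{B}_S)\big]\le J(\mathcal{B}_{S\setminus K})-J(\mathcal{B}_S).$$ (The largest such $\gamma$ is the supermodularity ratio $\gamma_{\sup}$; the objective is weakly supermodular if $\gamma_{\sup}>0$.) *)

(* Defs.v *)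
From Stdlib Require Import Reals Lra List ClassicalEpsilon.
From Stdlib Require Vectors.Fin.
Import ListNotations.
Open Scope R_scope.

Definition vec (n : nat) := Fin.t n -> R.
Definition vzero {n} : vec n := fun _ => 0.
Definition vadd {n} (u v : vec n) : vec n := fun i => u i + v i.
Definition vnonneg {n} (u : vec n) : Prop := forall i, 0 <= u i.

(* Bidders are identified by natural numbers; bidder sets are duplicate-free lists. *)
Definition mem (j : nat) (K : list nat) : bool := existsb (Nat.eqb j) K.
Definition ldiff (S K : list nat) : list nat := filter (fun j => negb (mem j K)) S.

Record Bid (t : nat) := mkBid { bdom : vec t -> Prop ; bval : vec t -> R }.
Arguments mkBid {t}. Arguments bdom {t}. Arguments bval {t}.

Definition ValidBid {t} (b : Bid t) : Prop :=
  bdom b vzero /\ bval b vzero = 0 /\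
  (forall x, bdom b x -> vnonneg x /\ 0 <= bval b x).

(* A bid profile assigns a bid to every identity (only those in the bidder set matter). *)
Definition Profile (t : nat) := nat -> Bid t.
Definition ValidProfile {t} (B : Profile t) (N : list nat) : Prop :=
  forall j, In j N -> ValidBid (B j).

(* Market: aggregate-dependent cost term dbar and constraints gbar. *)
Record Market (t p q : nat) := mkMarket
  { dbar : vec t -> vec p -> R ; gbar : vec t -> vec p -> vec q }.
Arguments dbar {t p q}. Arguments gbar {t p q}.

Definition vsum {t} (S : list nat) (x : nat -> vec t) : vec t :=
  fold_right (fun j acc => vadd (x j) acc) vzero S.

(* Feasibility for active bidder set S (x_j = 0 for inactive j is implicit:
   inactive bidders contribute neither to the aggregate nor to the bid sum). *)
Definition Feasible {t p q} (M : Market t p q) (B : Profile t) (S : list nat)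
  (x : nat -> vec t) (y : vec p) : Prop :=
  (forall j, In j S -> bdom (B j) (x j)) /\
  (forall i, gbar M (vsum S x) y i <= 0).

Definition Obj {t p q} (M : Market t p q) (B : Profile t) (S : list nat)
  (x : nat -> vec t) (y : vec p) : R :=
  fold_right (fun j acc => bval (B j) (x j) + acc) 0 S + dbar M (vsum S x) y.

Definition IsMin {t p q} (M : Market t p q) (B : Profile t) (S : list nat) (v : R) : Prop :=
  (exists x y, Feasible M B S x y /\ Obj M B S x y = v) /\
  (forall x y, Feasible M B S x y -> v <= Obj M B S x y).

Definition Jfin {t p q} (M : Market t p q) (B : Profile t) (S : list nat) : Prop :=
  exists v, IsMin M B S v.

(* J(B_S): the minimum value when it exists (arbitrary otherwise; only used when Jfin). *)
Definition J {t p q} (M : Market t p q) (B : Profile t) (S : list nat) : R :=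
  epsilon (inhabits 0) (fun v => IsMin M B S v).

Definition IsMinimizer {t p q} (M : Market t p q) (B : Profile t) (N : list nat)
  (x : nat -> vec t) (y : vec p) : Prop :=
  Feasible M B N x y /\ Obj M B N x y = J M B N /\
  (forall x' y', Feasible M B N x' y' -> Obj M B N x y <= Obj M B N x' y').

Definition vcg_pay {t p q} (M : Market t p q) (B : Profile t) (N : list nat)
  (x : nat -> vec t) (j : nat) : R :=
  bval (B j) (x j) + J M B (ldiff N [j]) - J M B N.

Definition sumR (K : list nat) (f : nat -> R) : R :=
  fold_right (fun j acc => f j + acc) 0 K.

Definition WeakSupermodConst {t p q} (M : Market t p q) (N : list nat) (gamma : R) : Prop :=
  0 < gamma /\
  forall (B : Profile t), ValidProfile B N ->
  forall K S : list nat, NoDup K -> NoDup S -> incl K N -> incl S N ->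
    Jfin M B (ldiff S K) -> Jfin M B S ->
    (forall j, In j K -> Jfin M B (ldiff S [j])) ->
    gamma * sumR K (fun j => J M B (ldiff S [j]) - J M B S)
      <= J M B (ldiff S K) - J M B S.

Definition override {t} (S : list nat) (bS C : Profile t) : Profile t :=
  fun j => if mem j S then bS j else C j.

Definition zero_bid_at {t} (l : nat) (C : Profile t) : Profile t :=
  fun j => if Nat.eqb j l then mkBid (bdom (C l)) (fun _ => 0) else C j.

Definition Standing {t p q} (M : Market t p q) (B : Profile t) (N : list nat) : Prop :=
  Jfin M B N /\ forall j, In j N -> Jfin M B (ldiff N [j]).

(* Main.v *)
Require Import Defs.
From Stdlib Require Import Reals Lra List ClassicalEpsilon FunctionalExtensionality.
Import ListNotations.
Open Scope R_scope.

Lemma mem_In j K : mem j K = true <-> In j K.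
Proof.
  unfold mem; rewrite existsb_exists; split.
  - intros [x [H E]]; apply Nat.eqb_eq in E; subst; auto.
  - intros; exists j; split; auto; apply Nat.eqb_refl.
Qed.

Lemma mem_notIn j K : mem j K = false <-> ~ In j K.
Proof.
  rewrite <- mem_In; destruct (mem j K); split; intros; congruence.
Qed.

Lemma In_ldiff j S K : In j (ldiff S K) <-> In j S /\ ~ In j K.
Proof.
  unfold ldiff; rewrite filter_In, Bool.negb_true_iff, mem_notIn; tauto.
Qed.

Lemma sumR_app A B f : sumR (A ++ B) f = sumR A f + sumR B f.
Proof. induction A; simpl; [lra| rewrite IHA; lra]. Qed.

Lemma sumR_ext A f g : (forall j, In j A -> f j = g j) -> sumR A f = sumR A g.
Proof.
  induction A; simpl; intros H; auto.
  rewrite H by auto; rewrite IHA; auto.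
Qed.

Lemma sumR_plus A f g : sumR A (fun j => f j + g j) = sumR A f + sumR A g.
Proof. induction A; simpl; [lra| rewrite IHA; lra]. Qed.

Lemma sumR_zero A f : (forall j, In j A -> f j = 0) -> sumR A f = 0.
Proof. induction A; simpl; intros H; auto. rewrite H, IHA by auto; lra. Qed.

Lemma sumR_nonneg A f : (forall j, In j A -> 0 <= f j) -> 0 <= sumR A f.
Proof. induction A; simpl; intros H; [lra|].
  assert (0 <= sumR A f) by (apply IHA; intros; apply H; auto).
  specialize (H a (or_introl eq_refl)). lra. Qed.

Lemma ldiff_notin L l : ~ In l L -> ldiff L [l] = L.
Proof.
  induction L; intros H; auto.
  unfold ldiff in *; cbn [filter].
  replace (mem a [l]) with false. cbn [negb]. rewrite IHL; auto. intro; apply H; right; auto.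
  symmetry; apply mem_notIn. intros [->|[]]; apply H; left; auto.
Qed.

Lemma sumR_remove L l f : NoDup L -> In l L -> sumR L f = f l + sumR (ldiff L [l]) f.
Proof.
  induction L as [|a L IH]; intros ND Hin; [destruct Hin|].
  inversion ND; subst.
  unfold ldiff; cbn [filter]. destruct (Nat.eqb_spec a l).
  - subst. replace (mem l [l]) with true by (symmetry; apply mem_In; left; auto).
    cbn [negb]. fold (ldiff L [l]). rewrite ldiff_notin; auto.
  - replace (mem a [l]) with false by (symmetry; apply mem_notIn; intros [->|[]]; congruence).
    cbn [negb]. fold (ldiff L [l]). destruct Hin as [->|Hin]; [congruence|].
    simpl. rewrite IH; auto. lra.
Qed.

Lemma sumR_single L k f : NoDup L -> In k L -> (forall j, In j L -> j <> k -> f j = 0) ->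
  sumR L f = f k.
Proof.
  intros ND Hk H. rewrite (sumR_remove L k) by auto.
  rewrite sumR_zero; [lra|]. intros j Hj; apply In_ldiff in Hj as [Hj1 Hj2].
  apply H; auto. intros ->; apply Hj2; left; auto.
Qed.

Lemma vsum_pt {t} S (x : nat -> vec t) i : vsum S x i = sumR S (fun j => x j i).
Proof. induction S; simpl; [reflexivity| unfold vadd; rewrite IHS; reflexivity]. Qed.

Lemma Obj_eq {t p q} (M : Market t p q) B S x y :
  Obj M B S x y = sumR S (fun j => bval (B j) (x j)) + dbar M (vsum S x) y.
Proof. reflexivity. Qed.

Lemma IsMin_unique {t p q} (M : Market t p q) B S v w : IsMin M B S v -> IsMin M B S w -> v = w.
Proof.
  intros [[x [y [F E]]] H] [[x' [y' [F' E']]] H'].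
  specialize (H _ _ F'). specialize (H' _ _ F). lra.
Qed.

Lemma J_IsMin {t p q} (M : Market t p q) B S v : IsMin M B S v -> J M B S = v.
Proof.
  intros H. unfold J.
  pose proof (epsilon_spec (inhabits 0) (fun v => IsMin M B S v) (ex_intro _ v H)) as H2.
  eapply IsMin_unique; eauto.
Qed.

Lemma Jfin_IsMin {t p q} (M : Market t p q) B S : Jfin M B S -> IsMin M B S (J M B S).
Proof. intros [v H]. rewrite (J_IsMin _ _ _ _ H); auto. Qed.

Lemma IsMin_transfer {t p q} (M : Market t p q) D T E A v :
 (forall x y, Feasible M D T x y -> exists x', Feasible M E A x' y /\ Obj M E A x' y <= Obj M D T x y) ->
 (forall x y, Feasible M E A x y -> exists x', Feasible M D T x' y /\ Obj M D T x' y <= Obj M E A x y) ->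
 IsMin M E A v -> IsMin M D T v.
Proof.
  intros H1 H2 [[x [y [F Ev]]] Hlb].
  assert (LB : forall x y, Feasible M D T x y -> v <= Obj M D T x y).
  { intros x0 y0 F0. destruct (H1 _ _ F0) as [x' [F' L']]. specialize (Hlb _ _ F'). lra. }
  split; auto.
  destruct (H2 _ _ F) as [x' [F' L']]. exists x', y; split; auto.
  specialize (LB _ _ F'). lra.
Qed.

Lemma IsMin_agree {t p q} (M : Market t p q) D E T v :
  (forall j, In j T -> D j = E j) -> IsMin M E T v -> IsMin M D T v.
Proof.
  intros Hag. apply IsMin_transfer; intros x y [F1 F2]; exists x; split.
  - split; auto. intros j Hj; rewrite <- Hag; auto.
  - rewrite !Obj_eq. rewrite (sumR_ext T (fun j => bval (D j) (x j)) (fun j => bval (E j) (x j))); [lra|].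
    intros j Hj; rewrite Hag; auto.
  - split; auto. intros j Hj; rewrite Hag; auto.
  - rewrite !Obj_eq. rewrite (sumR_ext T (fun j => bval (D j) (x j)) (fun j => bval (E j) (x j))); [lra|].
    intros j Hj; rewrite Hag; auto.
Qed.

Definition lift {t} (l : nat) (S : list nat) (x : nat -> vec t) : nat -> vec t :=
  fun j => if Nat.eqb j l then vsum S x else x j.

Lemma lift_vsum {t} L l S (x : nat -> vec t) : NoDup L -> In l L ->
  vsum L (lift l S x) = vsum (ldiff L [l] ++ S) x.
Proof.
  intros ND Hl. apply functional_extensionality; intro i.
  rewrite !vsum_pt, sumR_app, (sumR_remove L l) by auto.
  unfold lift at 1; rewrite Nat.eqb_refl, vsum_pt.
  rewrite (sumR_ext (ldiff L [l]) _ (fun j => x j i)); [lra|].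
  intros j Hj; apply In_ldiff in Hj; destruct Hj as [_ Hj]. unfold lift.
  destruct (Nat.eqb_spec j l); [subst; exfalso; apply Hj; left; auto| auto].
Qed.

Lemma lift_obj {t p q} (M : Market t p q) E L l S x y : NoDup L -> In l L ->
  Obj M E L (lift l S x) y = sumR (ldiff L [l]) (fun j => bval (E j) (x j))
     + bval (E l) (vsum S x) + dbar M (vsum (ldiff L [l] ++ S) x) y.
Proof.
  intros ND Hl. rewrite Obj_eq, lift_vsum by auto.
  rewrite (sumR_remove L l) by auto. unfold lift at 1; rewrite Nat.eqb_refl.
  rewrite (sumR_ext (ldiff L [l]) _ (fun j => bval (E j) (x j))); [lra|].
  intros j Hj; apply In_ldiff in Hj; destruct Hj as [_ Hj]. unfold lift.
  destruct (Nat.eqb_spec j l); [subst; exfalso; apply Hj; left; auto| auto].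
Qed.

Lemma lift_feas {t p q} (M : Market t p q) E L l S x y : NoDup L -> In l L ->
  (forall j, In j (ldiff L [l]) -> bdom (E j) (x j)) -> bdom (E l) (vsum S x) ->
  (forall i, gbar M (vsum (ldiff L [l] ++ S) x) y i <= 0) ->
  Feasible M E L (lift l S x) y.
Proof.
  intros ND Hl H1 H2 H3. split.
  - intros j Hj. unfold lift. destruct (Nat.eqb_spec j l); [subst; auto|].
    apply H1, In_ldiff; split; auto. intros [->|[]]; auto.
  - rewrite lift_vsum; auto.
Qed.

Lemma ldiff_disj A K : (forall j, In j A -> ~ In j K) -> ldiff A K = A.
Proof.
  induction A as [|a A IH]; intros H; auto. unfold ldiff in *; cbn [filter].
  replace (mem a K) with false by (symmetry; apply mem_notIn; apply H; left; auto).
  cbn [negb]. rewrite IH; auto. intros j Hj; apply H; right; auto.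
Qed.

Lemma ldiff_self A K : (forall j, In j A -> In j K) -> ldiff A K = [].
Proof.
  induction A as [|a A IH]; intros H; auto. unfold ldiff in *; cbn [filter].
  replace (mem a K) with true by (symmetry; apply mem_In; apply H; left; auto).
  cbn [negb]. rewrite IH; auto. intros j Hj; apply H; right; auto.
Qed.

Lemma ldiff_app A A' K : ldiff (A ++ A') K = ldiff A K ++ ldiff A' K.
Proof. unfold ldiff; apply filter_app. Qed.

Lemma ext_zero {t p q} (M : Market t p q) (C D : Profile t) A T x y :
  (forall j, In j A -> ~ In j T) -> (forall j, In j A -> D j = C j) ->
  (forall k, In k T -> bdom (D k) vzero /\ bval (D k) vzero = 0) ->
  Feasible M C A x y ->
  Feasible M D (A ++ T) (fun j => if mem j T then vzero else x j) y /\
  Obj M D (A ++ T) (fun j => if mem j T then vzero else x j) y = Obj M C A x y.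
Proof.
  intros Hd HDC HT [F1 F2].
  assert (HA : forall j, In j A -> (if mem j T then vzero else x j) = x j).
  { intros j Hj. rewrite (proj2 (mem_notIn _ _) (Hd j Hj)); auto. }
  assert (HTz : forall j, In j T -> (if mem j T then vzero else x j) = vzero).
  { intros j Hj. rewrite (proj2 (mem_In _ _) Hj); auto. }
  assert (Hv : vsum (A ++ T) (fun j => if mem j T then vzero else x j) = vsum A x).
  { apply functional_extensionality; intro i. rewrite !vsum_pt, sumR_app.
    rewrite (sumR_zero T); [| intros j Hj; rewrite HTz; auto].
    rewrite (sumR_ext A _ (fun j => x j i)); [lra|]. intros j Hj; rewrite HA; auto. }
  split; [split|].
  - intros j Hj. apply in_app_or in Hj as [Hj|Hj].
    + rewrite HA, HDC; auto.
    + rewrite HTz by auto. apply HT; auto.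
  - rewrite Hv; auto.
  - rewrite !Obj_eq, Hv, sumR_app.
    rewrite (sumR_zero T); [| intros j Hj; rewrite HTz; auto; apply HT; auto].
    rewrite (sumR_ext A _ (fun j => bval (C j) (x j))); [lra|].
    intros j Hj; rewrite HA, HDC; auto.
Qed.
Theorem theorem1 (t p q : nat) (M : Market t p q)
  (L : list nat) (l : nat) (C : Profile t)
  (S : list nat) (bS : Profile t) (gamma : R)
  (xB : nat -> vec t) (yB : vec p) (xC : nat -> vec t) (yC : vec p) :
  NoDup L -> In l L -> ValidProfile C L ->
  NoDup S -> S <> [] -> (forall k, In k S -> ~ In k L) ->
  ValidProfile bS S ->
  (* Minkowski sum of the identities' domains lies in X_l *)
  (forall x : nat -> vec t, (forall k, In k S -> bdom (bS k) (x k)) ->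
       bdom (C l) (vsum S x)) ->
  let B := override S bS C in
  let L' := ldiff L [l] ++ S in
  Standing M C L -> Standing M B L' -> Standing M (zero_bid_at l C) L ->
  WeakSupermodConst M L' gamma ->
  IsMinimizer M B L' xB yB -> IsMinimizer M C L xC yC ->
  let U_shill := sumR S (fun k => vcg_pay M B L' xB k) - bval (C l) (vsum S xB) in
  let u_l := vcg_pay M C L xC l - bval (C l) (xC l) in
  U_shill <= u_l + (/ gamma - 1) * (J M C (ldiff L [l]) - J M B L') /\
  u_l + (/ gamma - 1) * (J M C (ldiff L [l]) - J M B L')
    <= u_l + (/ gamma - 1) * (J M C (ldiff L [l]) - J M (zero_bid_at l C) L).
Proof.
  intros HNL HlL HVC HNS HSne HSL HVS Hmink B L' HstC HstB HstZ HWS HminB HminC U u.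
  set (A := ldiff L [l]) in *. subst L'.
  assert (HAS : forall j, In j A -> ~ In j S).
  { intros j Hj HjS. apply In_ldiff in Hj. apply (HSL j HjS), Hj. }
  assert (HAL : forall j, In j A -> In j L /\ j <> l).
  { intros j Hj. apply In_ldiff in Hj as [H1 H2]. split; auto. intros ->; apply H2; left; auto. }
  assert (HlS : ~ In l S) by (intro H; apply (HSL l H HlL)).
  assert (HL'nd : NoDup (A ++ S)).
  { apply NoDup_app; [apply NoDup_filter; auto | auto | intros a Ha Hs; apply (HAS a Ha Hs)]. }
  assert (HBC : forall j, ~ In j S -> B j = C j).
  { intros j Hj. unfold B, override. rewrite (proj2 (mem_notIn _ _) Hj); auto. }
  assert (HBS : forall k, In k S -> B k = bS k).
  { intros k Hk. unfold B, override. rewrite (proj2 (mem_In _ _) Hk); auto. }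
  assert (HL'S : ldiff (A ++ S) S = A).
  { rewrite ldiff_app, (ldiff_disj A S), (ldiff_self S S), app_nil_r; auto. }
  destruct HminB as [[FB1 FB2] [HobjB HlbB]].
  assert (HJCm : IsMin M C L (J M C L)) by (apply Jfin_IsMin, HstC).
  assert (HJZm : IsMin M (zero_bid_at l C) L (J M (zero_bid_at l C) L)) by (apply Jfin_IsMin, HstZ).
  assert (HJClm : IsMin M C A (J M C A)) by (apply Jfin_IsMin, HstC; auto).
  assert (HdomS : bdom (C l) (vsum S xB)).
  { apply Hmink. intros k Hk. rewrite <- HBS by auto. apply FB1. apply in_or_app; auto. }
  assert (HFA : forall j, In j A -> bdom (C j) (xB j)).
  { intros j Hj. rewrite <- HBC by auto. apply FB1, in_or_app; auto. }
  assert (HobjB' : J M B (A ++ S) = sumR A (fun j => bval (C j) (xB j))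
          + sumR S (fun k => bval (B k) (xB k)) + dbar M (vsum (A ++ S) xB) yB).
  { rewrite <- HobjB, Obj_eq. rewrite sumR_app. fold A.
    rewrite (sumR_ext A (fun j => bval (B j) (xB j)) (fun j => bval (C j) (xB j))); [lra|].
    intros j Hj; rewrite HBC; auto. }
  assert (HJC : J M C L <= sumR A (fun j => bval (C j) (xB j)) + bval (C l) (vsum S xB)
                  + dbar M (vsum (A ++ S) xB) yB).
  { pose proof (lift_obj M C L l S xB yB HNL HlL) as E. fold A in E. rewrite <- E. apply HJCm.
    apply lift_feas; auto. }
  assert (HJZ : J M (zero_bid_at l C) L <= J M B (A ++ S)).
  { assert (H : J M (zero_bid_at l C) L <= Obj M (zero_bid_at l C) L (lift l S xB) yB).
    { apply HJZm. apply lift_feas; auto.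
      - intros j Hj. unfold zero_bid_at. destruct (HAL j Hj) as [_ Hne].
        rewrite (proj2 (Nat.eqb_neq j l) Hne). auto.
      - unfold zero_bid_at. rewrite Nat.eqb_refl. simpl. auto. }
    rewrite lift_obj in H by auto. fold A in H.
    rewrite (sumR_ext A _ (fun j => bval (C j) (xB j))) in H.
    2:{ intros j Hj. unfold zero_bid_at. destruct (HAL j Hj) as [_ Hne].
        rewrite (proj2 (Nat.eqb_neq j l) Hne). auto. }
    replace (bval (zero_bid_at l C l) (vsum S xB)) with 0 in H by (unfold zero_bid_at; rewrite Nat.eqb_refl; reflexivity).
    assert (0 <= sumR S (fun k => bval (B k) (xB k))).
    { apply sumR_nonneg. intros k Hk. rewrite HBS by auto.
      apply (HVS k Hk). rewrite <- HBS by auto. apply FB1, in_or_app; auto. }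
    lra. }

  destruct HWS as [Hg HW].
  assert (HVB : ValidProfile B (A ++ S)).
  { intros j Hj. apply in_app_or in Hj as [Hj|Hj].
    - rewrite HBC by auto. apply HVC, HAL, Hj.
    - rewrite HBS by auto. apply HVS, Hj. }
  assert (HJBA : J M B A = J M C A).
  { apply J_IsMin. apply (IsMin_agree M B C); [intros j Hj; apply HBC; auto | auto]. }
  assert (HWB : gamma * sumR S (fun j => J M B (ldiff (A ++ S) [j]) - J M B (A ++ S))
                <= J M B (ldiff (A ++ S) S) - J M B (A ++ S)).
  { apply HW; auto.
    - intros k Hk; apply in_or_app; auto.
    - apply incl_refl.
    - rewrite HL'S. exists (J M C A). apply (IsMin_agree M B C); [intros j Hj; apply HBC; auto | auto].
    - apply HstB.
    - intros j Hj; apply (proj2 HstB); apply in_or_app; auto. }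
  rewrite HL'S, HJBA in HWB.
  assert (HJBle : J M B (A ++ S) <= J M C A).
  { destruct (proj1 HJClm) as [xa [ya [Fa Ea]]].
    assert (H1 : forall j, In j A -> B j = C j) by (intros j Hj; apply HBC; auto).
    assert (H2 : forall k, In k S -> bdom (B k) vzero /\ bval (B k) vzero = 0).
    { intros k Hk. rewrite HBS by auto. destruct (HVS k Hk) as [H3 [H4 _]]; auto. }
    destruct (ext_zero M C B A S xa ya HAS H1 H2 Fa) as [F' E'].
    rewrite <- HobjB. rewrite <- Ea, <- E'. apply HlbB; auto. }
  set (g := / gamma).
  assert (Hgg : gamma * g = 1) by (unfold g; field; lra).
  assert (Hgpos : 0 < g) by (unfold g; apply Rinv_0_lt_compat; lra).
  set (D := sumR S (fun j => J M B (ldiff (A ++ S) [j]) - J M B (A ++ S))) in *.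
  assert (HD : D <= g * (J M C A - J M B (A ++ S))).
  { replace D with (g * (gamma * D)) by (rewrite <- Rmult_assoc, (Rmult_comm g), Hgg; ring).
    apply Rmult_le_compat_l; lra. }
  assert (HU : U = sumR S (fun k => bval (B k) (xB k)) + D - bval (C l) (vsum S xB)).
  { unfold U, D, vcg_pay. rewrite <- sumR_plus. f_equal. apply sumR_ext; intros; ring. }
  assert (Hu : u = J M C A - J M C L) by (unfold u, vcg_pay; fold A; ring).
  split.
  { rewrite HU, Hu. assert (E1 : (g - 1) * (J M C A - J M B (A ++ S)) =
       g * (J M C A - J M B (A ++ S)) - (J M C A - J M B (A ++ S))) by ring.
    rewrite E1. lra. }

  assert (Hg1 : J M (zero_bid_at l C) L < J M B (A ++ S) -> gamma <= 1).
  { intros Hlt.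
    assert (Hex : exists k0, In k0 S) by (destruct S; [congruence| eexists; left; eauto]).
    destruct Hex as [k0 Hk0].
    destruct (proj1 HJZm) as [xz [yz [Fz Ez]]].
    set (w := xz l).
    set (Z := zero_bid_at l C) in *.
    assert (HZC : forall j, j <> l -> Z j = C j).
    { intros j Hj. unfold Z, zero_bid_at. rewrite (proj2 (Nat.eqb_neq j l) Hj); auto. }
    assert (HZl : Z l = mkBid (bdom (C l)) (fun _ => 0)).
    { unfold Z, zero_bid_at. rewrite Nat.eqb_refl; auto. }
    assert (Hw : bdom (C l) w).
    { destruct Fz as [Fz1 _]. specialize (Fz1 l HlL). rewrite HZl in Fz1. exact Fz1. }
    set (P := fun j => if mem j S then (if Nat.eqb j k0 then mkBid (fun x => x = vzero \/ x = w) (fun _ => 0)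
                       else mkBid (fun x => x = vzero) (fun _ : vec t => 0)) else C j).
    assert (HPC : forall j, ~ In j S -> P j = C j).
    { intros j Hj. unfold P. rewrite (proj2 (mem_notIn _ _) Hj); auto. }
    assert (HPk0 : P k0 = mkBid (fun x => x = vzero \/ x = w) (fun _ => 0)).
    { unfold P. rewrite (proj2 (mem_In _ _) Hk0), Nat.eqb_refl; auto. }
    assert (HPo : forall j, In j S -> j <> k0 -> P j = mkBid (fun x => x = vzero) (fun _ : vec t => 0)).
    { intros j Hj Hne. unfold P. rewrite (proj2 (mem_In _ _) Hj), (proj2 (Nat.eqb_neq j k0) Hne); auto. }
    assert (HPv : forall j x, In j S -> bval (P j) x = 0).
    { intros j x Hj. destruct (Nat.eq_dec j k0) as [->|Hne]; [rewrite HPk0| rewrite HPo]; auto. }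
    assert (HVP : ValidProfile P (A ++ S)).
    { intros j Hj. apply in_app_or in Hj as [Hj|Hj].
      - rewrite HPC by auto. apply HVC, HAL, Hj.
      - destruct (Nat.eq_dec j k0) as [Heq|Hne].
        + subst j. rewrite HPk0. split; [simpl; auto|]. split; [simpl; auto|].
          intros x Hx; simpl in *; split; [|lra].
          destruct Hx as [ Hx | Hx ]; subst x; [intro i; unfold vzero; lra| apply (HVC l HlL), Hw].
        + rewrite HPo by auto. split; [simpl; auto|]. split; [simpl; auto|].
          intros x Hx; simpl in *; split; [|lra]. subst x; intro i; unfold vzero; lra. }
    assert (HA : forall j, In j A -> ~ In j S) by exact HAS.
    assert (HPmin : IsMin M P (A ++ S) (J M Z L)).
    { split.
      - set (x2 := fun j => if mem j S then (if Nat.eqb j k0 then w else vzero) else xz j).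
        assert (Hx2A : forall j, In j A -> x2 j = xz j).
        { intros j Hj. unfold x2. rewrite (proj2 (mem_notIn _ _) (HAS j Hj)); auto. }
        assert (Hx2k : x2 k0 = w).
        { unfold x2. rewrite (proj2 (mem_In _ _) Hk0), Nat.eqb_refl; auto. }
        assert (Hx2o : forall j, In j S -> j <> k0 -> x2 j = vzero).
        { intros j Hj Hne. unfold x2. rewrite (proj2 (mem_In _ _) Hj), (proj2 (Nat.eqb_neq j k0) Hne); auto. }
        assert (Hv : vsum (A ++ S) x2 = vsum L xz).
        { apply functional_extensionality; intro i. rewrite !vsum_pt, sumR_app.
          rewrite (sumR_single S k0) by (auto; intros j Hj Hne; rewrite Hx2o; auto).
          rewrite (sumR_remove L l) by auto. fold A.
          rewrite (sumR_ext A (fun j => x2 j i) (fun j => xz j i)); [rewrite Hx2k; unfold w; lra|].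
          intros j Hj; rewrite Hx2A; auto. }
        exists x2, yz. split; [split|].
        + intros j Hj. apply in_app_or in Hj as [Hj|Hj].
          * rewrite Hx2A, HPC by auto. rewrite <- HZC by (apply HAL; auto).
            apply (proj1 Fz). apply HAL; auto.
          * destruct (Nat.eq_dec j k0) as [->|Hne]; [rewrite HPk0, Hx2k; simpl; auto
              | rewrite HPo, Hx2o by auto; simpl; auto].
        + rewrite Hv. apply Fz.
        + rewrite <- Ez, !Obj_eq, Hv, sumR_app, (sumR_remove L l) by auto. fold A.
          rewrite (sumR_zero S) by (intros; apply HPv; auto).
          rewrite HZl. simpl.
          rewrite (sumR_ext A (fun j => bval (P j) (x2 j)) (fun j => bval (Z j) (xz j))); [lra|].
          intros j Hj. rewrite Hx2A, HPC, HZC by (auto; apply HAL; auto). auto.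
      - intros x y [F1 F2].
        assert (Hxo : forall j, In j S -> j <> k0 -> x j = vzero).
        { intros j Hj Hne. specialize (F1 j (in_or_app _ _ _ (or_intror Hj))).
          rewrite HPo in F1 by auto. exact F1. }
        assert (HvS : vsum S x = x k0).
        { apply functional_extensionality; intro i. rewrite vsum_pt.
          rewrite (sumR_single S k0 (fun j => x j i)); auto.
          intros j Hj Hne; rewrite Hxo; auto. }
        assert (Hd : bdom (Z l) (vsum S x)).
        { rewrite HZl, HvS; simpl. specialize (F1 k0 (in_or_app _ _ _ (or_intror Hk0))).
          rewrite HPk0 in F1. destruct F1 as [ F1 | F1 ]; rewrite F1; auto. apply (HVC l HlL). }
        assert (HF : Feasible M Z L (lift l S x) y).
        { apply lift_feas; auto. intros j Hj. rewrite HZC by (apply HAL; auto).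
          rewrite <- HPC by auto. apply F1, in_or_app; auto. }
        eapply Rle_trans; [apply (proj2 HJZm _ _ HF)|].
        rewrite lift_obj by auto. fold A. rewrite Obj_eq, sumR_app.
        rewrite (sumR_zero S) by (intros; apply HPv; auto).
        rewrite HZl. simpl.
        rewrite (sumR_ext A (fun j => bval (P j) (x j)) (fun j => bval (Z j) (x j))); [lra|].
        intros j Hj. rewrite HPC, HZC by (auto; apply HAL; auto). auto. }

    set (S0 := ldiff S [k0]).
    assert (Hk0A : ~ In k0 A) by (intro H; apply (HAS k0 H Hk0)).
    assert (HLk : ldiff (A ++ S) [k0] = A ++ S0).
    { rewrite ldiff_app, (ldiff_disj A [k0]); auto. intros j Hj [->|[]]; auto. }
    assert (HS0 : forall j, In j S0 -> In j S /\ j <> k0).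
    { intros j Hj. apply In_ldiff in Hj as [H1 H2]. split; auto. intros ->; apply H2; left; auto. }
    assert (HPmin2 : IsMin M P (A ++ S0) (J M C A)).
    { apply (IsMin_transfer M P (A ++ S0) C A); auto.
      - intros x y [F1 F2].
        assert (Hv : vsum (A ++ S0) x = vsum A x).
        { apply functional_extensionality; intro i. rewrite !vsum_pt, sumR_app.
          rewrite (sumR_zero S0); [lra|]. intros j Hj. destruct (HS0 j Hj) as [H1 H2].
          specialize (F1 j (in_or_app _ _ _ (or_intror Hj))). rewrite HPo in F1 by auto.
          simpl in F1. rewrite F1; auto. }
        exists x; split; [split|].
        + intros j Hj. rewrite <- HPC by auto. apply F1, in_or_app; auto.
        + rewrite <- Hv; auto.
        + rewrite !Obj_eq, Hv, sumR_app, (sumR_zero S0) by (intros j Hj; apply HPv, HS0; auto).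
          rewrite (sumR_ext A (fun j => bval (P j) (x j)) (fun j => bval (C j) (x j))); [lra|].
          intros j Hj; rewrite HPC; auto.
      - intros x y Fx.
        assert (H1 : forall j, In j A -> ~ In j S0) by (intros j Hj H; apply (HAS j Hj), HS0, H).
        assert (H2 : forall j, In j A -> P j = C j) by (intros j Hj; apply HPC; auto).
        assert (H3 : forall k, In k S0 -> bdom (P k) vzero /\ bval (P k) vzero = 0).
        { intros k Hk. destruct (HS0 k Hk). rewrite HPo by auto. simpl; auto. }
        destruct (ext_zero M C P A S0 x y H1 H2 H3 Fx) as [F' E'].
        eexists; split; [exact F'| rewrite E'; lra]. }
    assert (HWP : gamma * sumR [k0] (fun j => J M P (ldiff (A ++ S) [j]) - J M P (A ++ S))
                <= J M P (ldiff (A ++ S) [k0]) - J M P (A ++ S)).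
    { apply HW; auto.
      - constructor; [intros []|constructor].
      - intros j [<-|[]]; apply in_or_app; auto.
      - apply incl_refl.
      - rewrite HLk; eexists; eauto.
      - eexists; eauto.
      - intros j [<-|[]]. rewrite HLk; eexists; eauto. }
    simpl in HWP. rewrite HLk in HWP.
    rewrite (J_IsMin _ _ _ _ HPmin), (J_IsMin _ _ _ _ HPmin2) in HWP.
    assert (0 < J M C A - J M Z L) by lra.
    nra. }
  destruct (Rle_lt_or_eq_dec _ _ HJZ) as [Hlt|Heq].
  - specialize (Hg1 Hlt).
    assert (1 <= g) by nra.
    assert (0 <= (g - 1) * (J M B (A ++ S) - J M (zero_bid_at l C) L)) by (apply Rmult_le_pos; lra).
    nra.
  - rewrite Heq. lra.
Qed.
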